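(* Let $G$ be a torsion-free group and $\mathcal F\subset\mathcal P_G$ a left-invariant ideal. Then for every limit ordinal $\alpha$ (including $\alpha=0$) the family $\tau^{<\alpha}(\mathcal F)$ is additive. In particular, the thin-completion $\tau^*(\mathcal F)$ is a (left-invariant) ideal in $\mathcal P_G$.
   Context: $\mathcal P_G$ is the family of all subsets of $G$; $e$ is the neutral element. A family $\mathcal F\subset\mathcal P_G$ is left-invariant if $xF\in\mathcal F$ for all $F\in\mathcal F$, $x\in G$; lower if $A\subset B\in\mathcal F$ implies $A\in\mathcal F$; additive if $A\cup B\in\mathcal F$ for all $A,B\in\mathcal F$; an ideal if it is lower and additive. For a left-invariant lower family $\mathcal F$: $\tau(\mathcal F)=\{A\subset G: xA\cap yA\in\mathcal F$ for all distinct $x,y\in G\}$; $\tau^0(\mathcal F)=\mathcal F$, $\tau^{<\alpha}(\mathcal F)=\bigcup_{\beta<\alpha}\tau^\beta(\mathcal F)$ and $\tau^\alpha(\mathcal F)=\tau(\tau^{<\alpha}(\mathcal F))$ for $\alpha>0$. $\mathcal F$ is thin-complete if $\tau(\mathcal F)=\mathcal F$; the thin-completion $\tau^*(\mathcal F)$ is the smallest thin-complete family containing $\mathcal F$; it equals $\bigcup_{\alpha<|G|^+}\tau^\alpha(\mathcal F)$. A group is torsion-free if every non-neutral element has infinite order. *)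

(* Defs.v *)
From Stdlib Require Import Arith.

Record group := Group {
  carrier :> Type;
  gmul : carrier -> carrier -> carrier;
  gone : carrier;
  ginv : carrier -> carrier;
  gmulA : forall x y z, gmul x (gmul y z) = gmul (gmul x y) z;
  gmul1l : forall x, gmul gone x = x;
  gmul1r : forall x, gmul x gone = x;
  gmulVl : forall x, gmul (ginv x) x = gone;
  gmulVr : forall x, gmul x (ginv x) = gone
}.

Section Defs.
Variable G : group.

Fixpoint gpow (g : G) (n : nat) : G :=
  match n with O => gone G | S m => gmul G g (gpow g m) end.

Definition torsion_free : Prop :=
  forall g : G, g <> gone G -> forall n : nat, 0 < n -> gpow g n <> gone G.

Definition subset_ (A B : G -> Prop) : Prop := forall z, A z -> B z.
Definition family := (G -> Prop) -> Prop.

Definition ltrans (x : G) (A : G -> Prop) : G -> Prop :=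
  fun z => exists a, A a /\ z = gmul G x a.
Definition inter (A B : G -> Prop) : G -> Prop := fun z => A z /\ B z.
Definition union (A B : G -> Prop) : G -> Prop := fun z => A z \/ B z.

Definition left_invariant (F : family) : Prop :=
  forall A x, F A -> F (ltrans x A).
Definition lower (F : family) : Prop :=
  forall A B, subset_ A B -> F B -> F A.
Definition additive (F : family) : Prop :=
  forall A B, F A -> F B -> F (union A B).
Definition ideal (F : family) : Prop := lower F /\ additive F.

Definition tau (F : family) : family :=
  fun A => forall x y : G, x <> y -> F (inter (ltrans x A) (ltrans y A)).

Definition thin_complete (F : family) : Prop := forall A, tau F A <-> F A.

Definition tau_star (F : family) : family :=
  fun A => forall T : family, left_invariant T -> lower T -> thin_complete T ->
    (forall B, F B -> T B) -> T A.

(* Transfinite hierarchy indexed by a well-order (W, lt): the element w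
   stands for the ordinal alpha = order type of {v | lt v w}.
   tau^alpha = F if alpha = 0, tau(tau^{<alpha}) otherwise. *)
Section Hierarchy.
Variable F : family.
Variables (W : Type) (lt : W -> W -> Prop).

Definition minimal (w : W) : Prop := forall v, ~ lt v w.

Inductive tau_at (w : W) (A : G -> Prop) : Prop :=
| tau_at_zero : minimal w -> F A -> tau_at w A
| tau_at_succ : ~ minimal w ->
    (forall x y : G, x <> y ->
       exists v, lt v w /\ tau_at v (inter (ltrans x A) (ltrans y A))) ->
    tau_at w A.

Definition tau_lt (w : W) : family := fun A => exists v, lt v w /\ tau_at v A.
End Hierarchy.
End Defs.

Definition well_order {W : Type} (lt : W -> W -> Prop) : Prop :=
  (forall x, ~ lt x x) /\
  (forall x y z, lt x y -> lt y z -> lt x z) /\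
  (forall x y, lt x y \/ x = y \/ lt y x) /\
  well_founded lt.

Definition is_limit {W : Type} (lt : W -> W -> Prop) (w : W) : Prop :=
  forall v, lt v w -> exists u, lt v u /\ lt u w.

(* Main.v *)
Require Import Defs.
From Stdlib Require Import List Arith Lia Classical FinFun.
Import ListNotations.

Definition fsub {G : group} (X Y : family G) : Prop := forall A, X A -> Y A.

Lemma mul_cancel_l {G : group} (x a b : G) : gmul G x a = gmul G x b -> a = b.
Proof.
  intro H. rewrite <- (gmul1l G a), <- (gmul1l G b), <- (gmulVl G x), <- !gmulA.
  now rewrite H.
Qed.

Lemma mul_cancel_r {G : group} (x a b : G) : gmul G a x = gmul G b x -> a = b.
Proof.
  intro H. rewrite <- (gmul1r G a), <- (gmul1r G b), <- (gmulVr G x), !gmulA.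
  now rewrite H.
Qed.

Lemma ltrans_comp {G : group} (x z : G) A :
  subset_ G (ltrans G x (ltrans G z A)) (ltrans G (gmul G x z) A).
Proof.
  intros w [a [[b [Hb ->]] ->]]. exists b. split; auto. apply gmulA.
Qed.

Lemma ltrans_sub {G : group} (x : G) A B : subset_ G A B -> subset_ G (ltrans G x A) (ltrans G x B).
Proof. intros H w [a [Ha ->]]. exists a; auto. Qed.

Lemma inter_sub {G : group} (A B C D : G -> Prop) :
  subset_ G A C -> subset_ G B D -> subset_ G (inter G A B) (inter G C D).
Proof. intros H1 H2 w [a b]. split; auto. Qed.

Lemma tau_mono {G : group} (K K' : family G) : fsub K K' -> fsub (tau G K) (tau G K').
Proof. intros H A HA x y Hxy. apply H, HA, Hxy. Qed.

Lemma tau_lower {G : group} (K : family G) : lower G K -> lower G (tau G K).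
Proof.
  intros HK A B HAB HB x y Hxy. eapply HK; [|apply HB, Hxy].
  apply inter_sub; apply ltrans_sub; auto.
Qed.

Lemma tau_li {G : group} (K : family G) : lower G K -> left_invariant G (tau G K).
Proof.
  intros HK A z HA x y Hxy.
  assert (Hn : gmul G x z <> gmul G y z) by (intro E; apply Hxy; eapply mul_cancel_r; eauto).
  eapply HK; [|apply (HA _ _ Hn)].
  apply inter_sub; apply ltrans_comp.
Qed.

Lemma incl_tau {G : group} (K : family G) : lower G K -> left_invariant G K -> fsub K (tau G K).
Proof.
  intros Hl Hi A HA x y _. eapply Hl; [|apply (Hi A x HA)].
  intros w [a b]; auto.
Qed.

Fixpoint titer {G : group} (n : nat) (K : family G) : family G :=
  match n with O => K | S n => tau G (titer n K) end.

Lemma titer_lower {G : group} n (K : family G) : lower G K -> lower G (titer n K).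
Proof. intro H; induction n; simpl; auto using tau_lower. Qed.

Lemma titer_li {G : group} n (K : family G) : lower G K -> left_invariant G K -> left_invariant G (titer n K).
Proof. intros H1 H2; destruct n; simpl; auto using tau_li, titer_lower. Qed.

Lemma titer_mono {G : group} n (K K' : family G) : fsub K K' -> fsub (titer n K) (titer n K').
Proof. intro H; induction n; simpl; auto using tau_mono. Qed.

Lemma titer_add {G : group} a b (K : family G) : titer (a + b) K = titer a (titer b K).
Proof. induction a; simpl; congruence. Qed.

Definition bigU_l {G : group} (L : list (G -> Prop)) : G -> Prop :=
  fun z => exists A, In A L /\ A z.

Definition Cap {G : group} (C : G -> Prop) (Gm : list G) : G -> Prop :=
  fun z => forall g, In g Gm -> ltrans G g C z.

Definition HasD {G : group} (n : nat) (Gm : list G) : Prop :=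
  exists d, NoDup d /\ incl d Gm /\ length d = n.

Lemma gpow_add {G : group} (z : G) a b : gpow G z (a + b) = gmul G (gpow G z a) (gpow G z b).
Proof. induction a; simpl. now rewrite gmul1l. rewrite IHa. apply gmulA. Qed.

Lemma doubling {G : group} (HG : torsion_free G) n (Gm : list G) x y :
  HasD n Gm -> 1 <= n -> x <> y ->
  HasD (S n) (map (gmul G x) Gm ++ map (gmul G y) Gm).
Proof.
  intros [d [Hnd [Hinc Hlen]]] Hn Hxy.
  set (z := gmul G (ginv G x) y).
  assert (Hz : z <> gone G).
  { intro E. apply Hxy.
    assert (Ey : y = gmul G x z) by (unfold z; rewrite gmulA, gmulVr, gmul1l; auto).
    rewrite Ey, E. now rewrite gmul1r. }
  destruct (classic (exists e, In e d /\ ~ In (gmul G y e) (map (gmul G x) d))) as [[e [He Hne]]|Hno].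
  - exists (gmul G y e :: map (gmul G x) d). repeat split.
    + constructor; auto. apply Injective_map_NoDup; auto.
      intros a b; apply mul_cancel_l.
    + intros w [<-|Hw]; apply in_or_app.
      * right. apply in_map. auto.
      * left. apply in_map_iff in Hw. destruct Hw as [a [<- Ha]]. apply in_map. auto.
    + simpl. now rewrite length_map, Hlen.
  - exfalso.
    assert (Hcl : forall e, In e d -> In (gmul G z e) d).
    { intros e He. destruct (classic (In (gmul G y e) (map (gmul G x) d))) as [Hi|Hi].
      - apply in_map_iff in Hi. destruct Hi as [a [Ea Ha]].
        replace (gmul G z e) with a; auto. unfold z.
        rewrite <- gmulA, <- Ea, gmulA, gmulVl, gmul1l. reflexivity.
      - exfalso. apply Hno. eauto. }
    destruct d as [|d0 dr]; [simpl in Hlen; lia|].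
    set (orb := map (fun i => gmul G (gpow G z i) d0) (seq 0 (S n))).
    assert (Hnd' : NoDup orb).
    { apply Injective_map_NoDup; [|apply seq_NoDup].
      intros i j E. apply mul_cancel_r in E.
      destruct (Nat.lt_total i j) as [Hij|[Hij|Hij]]; auto; exfalso.
      - replace j with (i + (j - i)) in E by lia. rewrite gpow_add in E.
        rewrite <- (gmul1r G (gpow G z i)) in E at 1. apply mul_cancel_l in E.
        apply (HG z Hz (j - i)); [lia|auto].
      - replace i with (j + (i - j)) in E by lia. rewrite gpow_add in E.
        rewrite <- (gmul1r G (gpow G z j)) in E at 2. apply mul_cancel_l in E.
        apply (HG z Hz (i - j)); [lia|auto]. }
    assert (Hinc' : incl orb (d0 :: dr)).
    { intros w Hw. apply in_map_iff in Hw. destruct Hw as [i [<- _]].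
      induction i; simpl.
      - rewrite gmul1l. now left.
      - rewrite <- gmulA. apply Hcl. auto. }
    apply NoDup_incl_length in Hinc'; auto.
    unfold orb in Hinc'. rewrite length_map, length_seq in Hinc'. lia.
Qed.

Lemma cap_double {G : group} (C : G -> Prop) Gm x y :
  subset_ G (inter G (ltrans G x (Cap C Gm)) (ltrans G y (Cap C Gm)))
            (Cap C (map (gmul G x) Gm ++ map (gmul G y) Gm)).
Proof.
  intros w [[w1 [H1 ->]] [w2 [H2 E]]] g Hg.
  apply in_app_or in Hg. destruct Hg as [Hg|Hg]; apply in_map_iff in Hg; destruct Hg as [g' [<- Hg']].
  - destruct (H1 g' Hg') as [a [Ha ->]]. exists a. split; auto. apply gmulA.
  - rewrite E. destruct (H2 g' Hg') as [a [Ha ->]]. exists a. split; auto. apply gmulA.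
Qed.

Lemma climb {G : group} (HG : torsion_free G) (C : G -> Prop) (Y : family G) :
  lower G Y -> forall j n Gm, 1 <= n ->
  (forall Gm', HasD (n + j) Gm' -> Y (Cap C Gm')) -> HasD n Gm -> titer j Y (Cap C Gm).
Proof.
  intros HY j. induction j; intros n Gm Hn Hyp HD; simpl.
  - apply Hyp. now rewrite Nat.add_0_r.
  - intros x y Hxy. eapply (titer_lower j Y HY); [apply cap_double|].
    apply (IHj (S n)); [lia| |apply doubling; auto].
    intros Gm' H'. apply Hyp. now rewrite <- plus_n_Sm.
Qed.

Fixpoint dpairs {T : Type} (l : list T) : list (T * T) :=
  match l with [] => [] | a :: r => map (fun b => (a, b)) r ++ dpairs r end.

Lemma dpairs_neq {T : Type} (l : list T) : NoDup l -> forall a b, In (a, b) (dpairs l) -> a <> b.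
Proof.
  induction l as [|c r IH]; simpl; [tauto|]. intros Hnd a b Hin. inversion Hnd; subst.
  apply in_app_or in Hin. destruct Hin as [Hin|Hin].
  - apply in_map_iff in Hin. destruct Hin as [b' [E Hb]]. inversion E; subst. intro; subst; auto.
  - apply IH; auto.
Qed.

Lemma dpairs_length {T : Type} (l : list T) : length (dpairs l) <= length l * length l.
Proof.
  induction l as [|c r IH]; simpl; auto. rewrite length_app, length_map. nia.
Qed.

Lemma pigeon {T C : Type} (R : T -> C -> Prop) (d : list T) (L : list C) :
  length L < length d -> (forall g, In g d -> exists c, In c L /\ R g c) ->
  exists a b c, In (a, b) (dpairs d) /\ In c L /\ R a c /\ R b c.
Proof.
  revert L. induction d as [|a r IH]; intros L Hl Hc; simpl in Hl; [lia|].
  destruct (Hc a (or_introl eq_refl)) as [c0 [Hc0 Ra]].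
  destruct (classic (exists b, In b r /\ R b c0)) as [[b [Hb Rb]]|Hno].
  - exists a, b, c0. repeat split; auto. simpl. apply in_or_app. left. apply in_map. auto.
  - apply in_split in Hc0. destruct Hc0 as [l1 [l2 ->]].
    destruct (IH (l1 ++ l2)) as [a' [b' [c [H1 [H2 [H3 H4]]]]]].
    + rewrite length_app in *. simpl in Hl. lia.
    + intros g Hg. destruct (Hc g (or_intror Hg)) as [c [Hin Rg]].
      exists c. split; auto. apply in_app_or in Hin. apply in_or_app. destruct Hin as [Hin|[E|Hin]]; auto.
      subst. exfalso. apply Hno. eauto.
    + exists a', b', c. repeat split; auto.
      * simpl. apply in_or_app. right. auto.
      * apply in_or_app. apply in_app_or in H2. simpl. tauto.
Qed.

Lemma length_flat_map_le {A B : Type} (f : A -> list B) l c :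
  (forall a, length (f a) <= c) -> length (flat_map f l) <= length l * c.
Proof.
  intro H. induction l; simpl; auto. rewrite length_app. specialize (H a). lia.
Qed.

Lemma bigU_in {G : group} (H : family G) : lower G H -> additive G H ->
  forall L, L <> [] -> (forall A, In A L -> H A) -> H (bigU_l L).
Proof.
  intros Hl Ha L. induction L as [|A r IH]; intros Hne Hall; [congruence|].
  destruct r as [|B r'].
  - eapply Hl; [|apply (Hall A (or_introl eq_refl))].
    intros z [A' [[<-|[]] Hz]]; auto.
  - eapply Hl; [|apply (Ha A (bigU_l (B :: r'))); [apply Hall; now left|apply IH; [congruence|intros; apply Hall; now right]]].
    intros z [A' [[<-|Hin] Hz]]; [now left|right]. exists A'; auto.
Qed.

Lemma Kk {G : group} (HG : torsion_free G) (H : family G) :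
  left_invariant G H -> lower G H -> additive G H ->
  forall i K, exists m, forall (L : list (G -> Prop)) X, L <> [] -> length L <= K ->
    (forall A, In A L -> titer i H A) -> subset_ G X (bigU_l L) -> titer m H X.
Proof.
  intros Hli Hlo Had i. induction i as [|i IH]; intros K.
  - exists 0. intros L X Hne _ Hall Hsub. simpl in *.
    eapply Hlo; [apply Hsub|]. apply bigU_in; auto.
  - destruct (IH (K * (K * K + 1 + 2 * K))) as [m Hm].
    exists (K + m). intros L X Hne HlenL Hall Hsub.
    set (C := bigU_l L).
    assert (Claim1 : forall Gm, HasD (1 + K) Gm -> titer m H (Cap C Gm)).
    { intros Gm [d [Hnd [Hinc Hld]]].
      set (PL := flat_map (fun p => map (fun A => inter G (ltrans G (fst p) A) (ltrans G (snd p) A)) L) (dpairs d)).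
      assert (Hcov : subset_ G (Cap C Gm) (bigU_l PL)).
      { intros z Hz.
        destruct (pigeon (fun g A => ltrans G g A z) d L) as [a [b [A [Hab [HA [Ha Hb]]]]]].
        - lia.
        - intros g Hg. destruct (Hz g (Hinc g Hg)) as [w [[A [HA HAw]] ->]].
          exists A. split; auto. exists w. auto.
        - exists (inter G (ltrans G a A) (ltrans G b A)). split; [|split; auto].
          unfold PL. apply in_flat_map. exists (a, b). split; auto. simpl.
          apply in_map_iff. eauto. }
      apply (Hm PL).
      - destruct L as [|A0 L']; [congruence|].
        destruct d as [|a [|b d']]; simpl in Hld, HlenL; try lia.
        intro E. assert (Hi : In (inter G (ltrans G a A0) (ltrans G b A0)) PL).
        { unfold PL. apply in_flat_map. exists (a, b). split; [simpl; auto|].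
          simpl. auto. }
        rewrite E in Hi. destruct Hi.
      - unfold PL. eapply Nat.le_trans; [apply length_flat_map_le with (c := length L)|].
        + intros p. now rewrite length_map.
        + pose proof (dpairs_length d). rewrite Hld in H0.
          assert (length (dpairs d) * length L <= (1 + K) * (1 + K) * K) by nia. nia.
      - intros P HP. unfold PL in HP. apply in_flat_map in HP. destruct HP as [[a b] [Hab HP]].
        apply in_map_iff in HP. destruct HP as [A [<- HA]]. simpl.
        apply (Hall A HA). eapply dpairs_neq; eauto.
      - exact Hcov. }
    rewrite titer_add.
    eapply (titer_lower K (titer m H) (titer_lower m H Hlo)); [|apply (climb HG C (titer m H) (titer_lower m H Hlo) K 1 [gone G]); auto].
    + intros z Hz g [<-|[]]. exists z. split; [now apply Hsub|]. now rewrite gmul1l.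
    + exists [gone G]. repeat split; auto. constructor; auto. constructor. apply incl_refl.
Qed.

Lemma union2_sub {G : group} (A B : G -> Prop) : subset_ G (union G A B) (bigU_l [A; B]).
Proof. intros z [Hz|Hz]; [exists A|exists B]; simpl; auto. Qed.

Lemma Kbin {G : group} (HG : torsion_free G) (H : family G) :
  left_invariant G H -> lower G H -> additive G H ->
  forall n A B, titer n H A -> titer n H B -> exists m, titer m H (union G A B).
Proof.
  intros Hli Hlo Had n A B HA HB. destruct (Kk HG H Hli Hlo Had n 2) as [m Hm].
  exists m. apply (Hm [A; B]); auto.
  - discriminate.
  - intros C [<-|[<-|[]]]; auto.
  - apply union2_sub.
Qed.


Lemma ta_lower {G : group} (F : family G) (W : Type) (lt : W -> W -> Prop) :
  well_founded lt -> lower G F -> forall v, lower G (tau_at G F W lt v).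
Proof.
  intros Hwf HF v. induction v as [v IH] using (well_founded_ind Hwf).
  intros A B HAB HB. destruct HB as [Hm HFB|Hnm Hp].
  - apply tau_at_zero; auto. eapply HF; eauto.
  - apply tau_at_succ; auto. intros x y Hxy. destruct (Hp x y Hxy) as [u [Hu Hta]].
    exists u. split; auto. eapply IH; eauto. apply inter_sub; apply ltrans_sub; auto.
Qed.

Lemma ta_li {G : group} (F : family G) (W : Type) (lt : W -> W -> Prop) :
  well_founded lt -> lower G F -> left_invariant G F -> forall v, left_invariant G (tau_at G F W lt v).
Proof.
  intros Hwf HF HFi v A z HA. destruct HA as [Hm HFA|Hnm Hp].
  - apply tau_at_zero; auto.
  - apply tau_at_succ; auto. intros x y Hxy.
    assert (Hn : gmul G x z <> gmul G y z) by (intro E; apply Hxy; eapply mul_cancel_r; eauto).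
    destruct (Hp _ _ Hn) as [u [Hu Hta]].
    exists u. split; auto. eapply ta_lower; eauto. apply inter_sub; apply ltrans_comp.
Qed.

Lemma ta_F {G : group} (F : family G) (W : Type) (lt : W -> W -> Prop) :
  well_founded lt -> lower G F -> left_invariant G F -> forall v, fsub F (tau_at G F W lt v).
Proof.
  intros Hwf HF HFi v. induction v as [v IH] using (well_founded_ind Hwf).
  intros A HA. destruct (classic (minimal W lt v)) as [Hm|Hnm].
  - apply tau_at_zero; auto.
  - apply tau_at_succ; auto. apply not_all_ex_not in Hnm. destruct Hnm as [u Hu].
    apply NNPP in Hu. intros x y _. exists u. split; auto. apply IH; auto.
    eapply HF; [|apply (HFi A x HA)]. intros w [a b]; auto.
Qed.

Lemma ta_succ {G : group} (F : family G) (W : Type) (lt : W -> W -> Prop) u u' :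
  lt u u' -> fsub (tau G (tau_at G F W lt u)) (tau_at G F W lt u').
Proof.
  intros Hu A HA. apply tau_at_succ.
  - intro Hm. apply (Hm u Hu).
  - intros x y Hxy. exists u. auto.
Qed.

Lemma ta_mono {G : group} (F : family G) (W : Type) (lt : W -> W -> Prop) :
  well_founded lt -> lower G F -> left_invariant G F ->
  forall u u', lt u u' -> fsub (tau_at G F W lt u) (tau_at G F W lt u').
Proof.
  intros Hwf HF HFi u u' Hu A HA. apply (ta_succ F W lt u u' Hu).
  apply incl_tau; auto using ta_lower, ta_li.
Qed.

Lemma ta_min {G : group} (F : family G) (W : Type) (lt : W -> W -> Prop) v :
  minimal W lt v -> fsub (tau_at G F W lt v) F.
Proof. intros Hm A HA. destruct HA; auto. contradiction. Qed.

Lemma ta_nmin {G : group} (F : family G) (W : Type) (lt : W -> W -> Prop) v :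
  ~ minimal W lt v -> fsub (tau_at G F W lt v) (tau G (tau_lt G F W lt v)).
Proof.
  intros Hm A HA. destruct HA as [Hm'|_ Hp]; [contradiction|].
  intros x y Hxy. destruct (Hp x y Hxy) as [u [Hu Ht]]. exists u; auto.
Qed.

Lemma tl_lower {G : group} (F : family G) (W : Type) (lt : W -> W -> Prop) :
  well_founded lt -> lower G F -> forall w, lower G (tau_lt G F W lt w).
Proof.
  intros Hwf HF w A B HAB [u [Hu HB]]. exists u. split; auto. eapply ta_lower; eauto.
Qed.

Lemma tl_li {G : group} (F : family G) (W : Type) (lt : W -> W -> Prop) :
  well_founded lt -> lower G F -> left_invariant G F -> forall w, left_invariant G (tau_lt G F W lt w).
Proof.
  intros Hwf HF HFi w A z [u [Hu HA]]. exists u. split; auto. eapply ta_li; eauto.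
Qed.

Lemma chain {G : group} (F : family G) (W : Type) (lt : W -> W -> Prop) (X : family G) w u0 :
  is_limit lt w -> lt u0 w -> fsub X (tau_at G F W lt u0) ->
  forall m, exists u, lt u w /\ fsub (titer m X) (tau_at G F W lt u).
Proof.
  intros Hl Hu0 HX m. induction m as [|m [u [Hu Hs]]].
  - exists u0. auto.
  - destruct (Hl u Hu) as [u' [H1 H2]]. exists u'. split; auto.
    intros A HA. apply (ta_succ F W lt u u' H1). simpl in HA. eapply tau_mono; eauto.
Qed.

Definition PropV {G : group} (F : family G) (W : Type) (lt : W -> W -> Prop) (v : W) : Prop :=
  exists (H : family G) n, left_invariant G H /\ lower G H /\ additive G H /\
    fsub (tau_at G F W lt v) (titer n H) /\
    forall w, is_limit lt w -> lt v w -> forall m, exists u, lt u w /\ fsub (titer m H) (tau_at G F W lt u).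

Lemma lim_add {G : group} (HG : torsion_free G) (F : family G) (W : Type) (lt : W -> W -> Prop) :
  well_order lt -> lower G F -> left_invariant G F ->
  forall w, is_limit lt w -> (forall v, lt v w -> PropV F W lt v) -> additive G (tau_lt G F W lt w).
Proof.
  intros [Hirr [Htr [Htot Hwf]]] HF HFi w Hl IH A B [v1 [Hv1 HA]] [v2 [Hv2 HB]].
  assert (Hc : exists v, lt v w /\ tau_at G F W lt v A /\ tau_at G F W lt v B).
  { destruct (Htot v1 v2) as [H12|[<-|H21]].
    - exists v2. repeat split; auto. eapply ta_mono; eauto.
    - exists v1. auto.
    - exists v1. repeat split; auto. eapply ta_mono; eauto. }
  destruct Hc as [v [Hv [HA' HB']]].
  destruct (IH v Hv) as [H [n [Hli [Hlo [Had [Hsub Hcl]]]]]].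
  destruct (Kbin HG H Hli Hlo Had n A B (Hsub _ HA') (Hsub _ HB')) as [m Hm].
  destruct (Hcl w Hl Hv m) as [u [Hu Hs]]. exists u. auto.
Qed.

Lemma propV_all {G : group} (HG : torsion_free G) (F : family G) (W : Type) (lt : W -> W -> Prop) :
  well_order lt -> left_invariant G F -> ideal G F -> forall v, PropV F W lt v.
Proof.
  intros Hwo HFi [HF HFa]. pose proof Hwo as [Hirr [Htr [Htot Hwf]]].
  intro v. induction v as [v IH] using (well_founded_ind Hwf).
  destruct (classic (minimal W lt v)) as [Hm|Hnm].
  - exists F, 0. repeat split; auto.
    + apply ta_min; auto.
    + intros w Hl Hvw m. apply (chain F W lt F w v Hl Hvw); auto. apply ta_F; auto.
  - destruct (classic (is_limit lt v)) as [Hl|Hnl].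
    + exists (tau_lt G F W lt v), 1. repeat split.
      * apply tl_li; auto.
      * apply tl_lower; auto.
      * apply (lim_add HG F W lt Hwo HF HFi v Hl IH).
      * apply ta_nmin; auto.
      * intros w Hlw Hvw m. apply (chain F W lt _ w v Hlw Hvw).
        intros A [u [Hu HA]]. eapply ta_mono; eauto.
    + unfold is_limit in Hnl. apply not_all_ex_not in Hnl. destruct Hnl as [p Hp].
      apply imply_to_and in Hp. destruct Hp as [Hpv Hno].
      destruct (IH p Hpv) as [H [n [Hli [Hlo [Had [Hsub Hcl]]]]]].
      exists H, (S n). repeat split; auto.
      * intros A HA. simpl. apply ta_nmin in HA; auto. eapply tau_mono; [|exact HA].
        intros B [u [Hu HB]]. apply Hsub.
        destruct (Htot u p) as [Hup|[<-|Hpu]]; auto.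
        -- eapply ta_mono; eauto.
        -- exfalso. apply Hno. eauto.
      * intros w Hlw Hvw. apply Hcl; auto. eapply Htr; eauto.
Qed.

Lemma part1 {G : group} (HG : torsion_free G) (F : family G) :
  left_invariant G F -> ideal G F ->
  forall (W : Type) (lt : W -> W -> Prop), well_order lt ->
     forall w : W, is_limit lt w -> additive G (tau_lt G F W lt w).
Proof.
  intros HFi HFid W lt Hwo w Hl. destruct HFid as [HF HFa].
  apply (lim_add HG F W lt Hwo HF HFi w Hl).
  intros v _. apply propV_all; auto. split; auto.
Qed.

Definition bigF {G : group} (P : family G -> Prop) : family G :=
  fun A => exists X, P X /\ X A.

Inductive Tw {G : group} (F : family G) : family G -> Prop :=
| tw_base : Tw F F
| tw_tau : forall X, Tw F X -> Tw F (tau G X)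
| tw_sup : forall P : family G -> Prop, (exists X, P X) -> (forall X, P X -> Tw F X) -> Tw F (bigF P).

Lemma tw_props {G : group} (F : family G) : lower G F -> left_invariant G F ->
  forall X, Tw F X -> lower G X /\ left_invariant G X /\ fsub F X.
Proof.
  intros HF HFi X HX. induction HX as [|X HX [Hl [Hi Hs]]|P [X0 HX0] HP IH].
  - repeat split; auto. intros A h; auto.
  - repeat split; auto using tau_lower, tau_li.
    intros A HA. apply incl_tau; auto.
  - repeat split.
    + intros A B HAB [X [HX HB]]. exists X. split; auto. eapply (proj1 (IH X HX)); eauto.
    + intros A z [X [HX HA]]. exists X. split; auto. apply (proj1 (proj2 (IH X HX))); auto.
    + intros A HA. exists X0. split; auto. apply (proj2 (proj2 (IH X0 HX0))); auto.
Qed.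

Lemma tw_incl {G : group} (F : family G) : lower G F -> left_invariant G F ->
  forall X, Tw F X -> fsub X (tau G X).
Proof. intros HF HFi X HX. destruct (tw_props F HF HFi X HX) as [? [? ?]]. apply incl_tau; auto. Qed.

Definition ssub {G : group} (X Y : family G) := fsub X Y /\ ~ fsub Y X.

Definition Ext {G : group} (F : family G) (c : family G) :=
  forall x, Tw F x -> ssub x c -> fsub (tau G x) c.

Lemma extA {G : group} (F : family G) : lower G F -> left_invariant G F ->
  forall c, Tw F c -> Ext F c -> forall x, Tw F x -> fsub x c \/ fsub (tau G c) x.
Proof.
  intros HF HFi c Hc He x Hx. induction Hx as [|x Hx IH|P HPne HP IH].
  - left. apply (tw_props F HF HFi c Hc).
  - destruct IH as [IH|IH].
    + destruct (classic (fsub c x)) as [Hcx|Hcx].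
      * right. apply tau_mono; auto.
      * left. apply He; auto. split; auto.
    + right. intros A HA. apply (tw_incl F HF HFi x Hx). auto.
  - destruct (classic (forall X, P X -> fsub X c)) as [Hall|Hno].
    + left. intros A [X [HX HA]]. eapply Hall; eauto.
    + apply not_all_ex_not in Hno. destruct Hno as [X HX].
      apply imply_to_and in HX. destruct HX as [HX Hn].
      destruct (IH X HX) as [H1|H1]; [contradiction|].
      right. intros A HA. exists X. auto.
Qed.

Lemma extB {G : group} (F : family G) : lower G F -> left_invariant G F ->
  forall c, Tw F c -> Ext F c.
Proof.
  intros HF HFi c Hc. induction Hc as [|c Hc IH|P HPne HP IH].
  - intros x Hx [H1 H2]. exfalso. apply H2. apply (tw_props F HF HFi x Hx).
  - intros x Hx [H1 H2].
    destruct (extA F HF HFi c Hc IH x Hx) as [Hxc|Hcx]; [|contradiction].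
    apply tau_mono; auto.
  - intros x Hx [H1 H2].
    destruct (classic (forall X, P X -> fsub (tau G X) x)) as [Hall|Hno].
    + exfalso. apply H2. intros A [X [HX HA]]. apply (Hall X HX).
      apply (tw_incl F HF HFi X (HP X HX)). auto.
    + apply not_all_ex_not in Hno. destruct Hno as [c HPc].
      apply imply_to_and in HPc. destruct HPc as [HPc Hn].
      destruct (extA F HF HFi c (HP c HPc) (IH c HPc) x Hx) as [Hxc|Hcx]; [|contradiction].
      destruct (classic (fsub c x)) as [Hcx|Hcx].
      * apply not_all_ex_not in H2. destruct H2 as [A HA]. apply imply_to_and in HA.
        destruct HA as [[d [HPd HdA]] HxA].
        destruct (extA F HF HFi c (HP c HPc) (IH c HPc) d (HP d HPd)) as [Hdc|Hcd].
        -- exfalso. apply HxA. apply Hcx, Hdc, HdA.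
        -- intros B HB. exists d. split; auto. apply Hcd. eapply tau_mono; eauto.
      * intros B HB. exists c. split; auto. apply (IH c HPc x Hx); auto. split; auto.
Qed.

Lemma tw_total {G : group} (F : family G) : lower G F -> left_invariant G F ->
  forall X Y, Tw F X -> Tw F Y -> fsub X Y \/ fsub (tau G Y) X.
Proof. intros HF HFi X Y HX HY. apply (extA F HF HFi Y HY (extB F HF HFi Y HY) X HX). Qed.

Lemma tw_total' {G : group} (F : family G) : lower G F -> left_invariant G F ->
  forall X Y, Tw F X -> Tw F Y -> fsub X Y \/ fsub Y X.
Proof.
  intros HF HFi X Y HX HY. destruct (tw_total F HF HFi X Y HX HY) as [H|H]; auto.
  right. intros A HA. apply H. apply (tw_incl F HF HFi Y HY). auto.
Qed.

Lemma titer_tw {G : group} (F : family G) m X : Tw F X -> Tw F (titer m X).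
Proof. intro H; induction m; simpl; auto using tw_tau. Qed.

Lemma titer_infl {G : group} (F : family G) : lower G F -> left_invariant G F ->
  forall m X, Tw F X -> fsub X (titer m X).
Proof.
  intros HF HFi m X HX. induction m; simpl; [intros A; auto|].
  intros A HA. apply (tw_incl F HF HFi _ (titer_tw F m X HX)). auto.
Qed.

Definition PropT {G : group} (X : family G) : Prop :=
  exists (H : family G) n, left_invariant G H /\ lower G H /\ additive G H /\
    fsub X (titer n H) /\ forall m, fsub (titer m H) (titer m X).

Lemma propT_all {G : group} (HG : torsion_free G) (F : family G) :
  left_invariant G F -> ideal G F -> forall X, Tw F X -> PropT X.
Proof.
  intros HFi [HF HFa] X HX. induction HX as [|X HX IH|P HPne HP IH].
  - exists F, 0. split; [auto|split; [auto|split; [auto|split]]].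
    + intros A h; exact h.
    + intros m A h; exact h.
  - destruct IH as [H [n [Hli [Hlo [Had [Hs Hc]]]]]].
    exists H, (S n). split; [auto|split; [auto|split; [auto|split]]].
    + simpl. apply tau_mono. auto.
    + intros m. intros A HA. apply (titer_mono m X (tau G X)).
      * apply (tw_incl F HF HFi X HX).
      * apply Hc. exact HA.
  - destruct (classic (exists X0, P X0 /\ forall Y, P Y -> fsub Y X0)) as [[X0 [HX0 Hmax]]|Hnomax].
    + destruct (IH X0 HX0) as [H [n [Hli [Hlo [Had [Hs Hc]]]]]].
      exists H, n. split; [auto|split; [auto|split; [auto|split]]].
      * intros A [Y [HY HA]]. apply Hs, (Hmax Y HY), HA.
      * intros m A HA. apply (titer_mono m X0); [|apply Hc; auto].
        intros B HB. exists X0. auto.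
    + assert (Hup : forall Y, P Y -> forall m, exists Y', P Y' /\ fsub (titer m Y) Y').
      { intros Y HY m. induction m as [|m [Ym [HYm Hs]]].
        - exists Y. split; auto. intros A h; auto.
        - assert (Hx : exists Y'', P Y'' /\ ~ fsub Y'' Ym).
          { apply NNPP. intro Hn. apply Hnomax. exists Ym. split; auto.
            intros Y'' HY''. apply NNPP. intro Hn'. apply Hn. eauto. }
          destruct Hx as [Y'' [HY'' Hn]].
          destruct (tw_total F HF HFi Y'' Ym (HP _ HY'') (HP _ HYm)) as [H1|H1]; [contradiction|].
          exists Y''. split; auto. intros A HA. apply H1. simpl in HA. eapply tau_mono; eauto. }
      exists (bigF P), 0. split; [|split; [|split; [|split]]].
      * intros A z [Y [HY HA]]. exists Y. split; auto. apply (proj1 (proj2 (tw_props F HF HFi Y (HP Y HY)))); auto.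
      * intros A B HAB [Y [HY HB]]. exists Y. split; auto. eapply (proj1 (tw_props F HF HFi Y (HP Y HY))); eauto.
      * intros A B [Y1 [HY1 HA]] [Y2 [HY2 HB]].
        assert (Hc : exists Y, P Y /\ Y A /\ Y B).
        { destruct (tw_total' F HF HFi Y1 Y2 (HP _ HY1) (HP _ HY2)) as [H|H]; [exists Y2|exists Y1]; auto. }
        destruct Hc as [Y [HY [HA' HB']]].
        destruct (IH Y HY) as [H [n [Hli [Hlo [Had [Hs Hc]]]]]].
        destruct (Kbin HG H Hli Hlo Had n A B (Hs _ HA') (Hs _ HB')) as [m Hm].
        destruct (Hup Y HY m) as [Y' [HY' Hs']]. exists Y'. split; auto.
        apply Hs', Hc, Hm.
      * intros A h; exact h.
      * intros m A h; exact h.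
Qed.

Lemma part2 {G : group} (HG : torsion_free G) (F : family G) :
  left_invariant G F -> ideal G F ->
  left_invariant G (tau_star G F) /\ ideal G (tau_star G F).
Proof.
  intros HFi HFid. pose proof HFid as [HF HFa].
  set (U := bigF (Tw F)).
  assert (HU : Tw F U) by (apply tw_sup; eauto using tw_base).
  destruct (tw_props F HF HFi U HU) as [HUl [HUi HUF]].
  assert (HSU : fsub (tau_star G F) U).
  { intros A HA. apply HA; auto.
    intros B. split; intro HB.
    - exists (tau G U). split; [apply tw_tau; auto|auto].
    - apply incl_tau; auto. }
  assert (HUS : forall X, Tw F X -> fsub X (tau_star G F)).
  { intros X HX. induction HX as [|X HX IH|P HPne HP IH].
    - intros A HA T _ _ _ HT. auto.
    - intros A HA T Ti Tl Tc HT. apply Tc. intros x y Hxy. apply (IH _ (HA x y Hxy)); auto.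
    - intros A [X [HX HA]]. apply (IH X HX); auto. }
  split; [|split].
  - intros A x HA T Ti Tl Tc HT. exact (Ti A x (HA T Ti Tl Tc HT)).
  - intros A B HAB HB T Ti Tl Tc HT. exact (Tl A B HAB (HB T Ti Tl Tc HT)).
  - intros A B HA HB.
    destruct (HSU A HA) as [Y1 [HY1 HA']]. destruct (HSU B HB) as [Y2 [HY2 HB']].
    assert (Hc : exists Y, Tw F Y /\ Y A /\ Y B).
    { destruct (tw_total' F HF HFi Y1 Y2 HY1 HY2) as [H|H]; [exists Y2|exists Y1]; auto. }
    destruct Hc as [Y [HY [HA2 HB2]]].
    destruct (propT_all HG F HFi HFid Y HY) as [H [n [Hli [Hlo [Had [Hs Hc]]]]]].
    destruct (Kbin HG H Hli Hlo Had n A B (Hs _ HA2) (Hs _ HB2)) as [m Hm].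
    apply (HUS (titer m Y) (titer_tw F m Y HY)). apply Hc. auto.
Qed.

Theorem theorem1p2 (G : group) (HG : torsion_free G) (F : family G)
  (HFinv : left_invariant G F) (HFid : ideal G F) :
  (forall (W : Type) (lt : W -> W -> Prop), well_order lt ->
     forall w : W, is_limit lt w -> additive G (tau_lt G F W lt w)) /\
  (left_invariant G (tau_star G F) /\ ideal G (tau_star G F)).
Proof.
  split.
  - exact (part1 HG F HFinv HFid).
  - exact (part2 HG F HFinv HFid).
Qed.
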